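(* Let $\mathcal{A}=\{H_1,\dots,H_n\}$ be an arrangement of $n$ distinct lines in $\mathbb{P}^2_{\mathbb{C}}$ and assume $|H_n\cap \operatorname{mult}(\mathcal{A})|\le 2$. Set $\mathcal{A}'=\{H_1,\dots,H_{n-1}\}$, $I=I(\mathcal{A})$, $I'=I(\mathcal{A}')$. If $\mathcal{R}(I')$ is irreducible (in the Zariski topology), then $\mathcal{R}(I)$ is also irreducible.
   Context: Each line $H_i=\{a_ix+b_iy+c_iz=0\}$ is identified with the point $(a_i:b_i:c_i)$ of the dual plane $(\mathbb{P}^2)^*$, and $\det(H_i,H_j,H_k)$ denotes the determinant of the $3\times 3$ matrix with rows $(a_i,b_i,c_i),(a_j,b_j,c_j),(a_k,b_k,c_k)$ (its vanishing is well defined and equivalent to $H_i\cap H_j\cap H_k\ne\emptyset$). The incidence of an arrangement $\mathcal{A}=\{H_1,\dots,H_n\}$ is $I(\mathcal{A})=\{\{i,j,k\}\subset\{1,\dots,n\}$ with $i,j,k$ distinct $: H_i\cap H_j\cap H_k\neq\emptyset\}$. For a set $I$ of 3-element subsets of $\{1,\dots,n\}$, the realization space is $\mathcal{R}(I)=\{(H_1,\dots,H_n)\in((\mathbb{P}^2)^* )^n : H_i\ne H_j \text{ for } i\ne j,\ \det(H_i,H_j,H_k)=0 \text{ for }\{i,j,k\}\in I,\ \det(H_i,H_j,H_k)\ne 0\text{ for }\{i,j,k\}\notin I\}$, a quasi-projective variety with its Zariski topology. For an arrangement $\mathcal{A}$, $\operatorname{mult}(\mathcal{A})$ is the set of points of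 $\mathbb{P}^2$ lying on at least three lines of $\mathcal{A}$ (multiple points). *)

(* Defs.v *)
From HB Require Import structures.
From mathcomp Require Import all_boot all_order all_algebra.
Set Implicit Arguments. Unset Strict Implicit. Unset Printing Implicit Defensive.
Import GRing.Theory.
Local Open Scope ring_scope.

Section LineArr.
Variable F : fieldType.

(* A line H = {a x + b y + c z = 0} of P^2 is represented by its (nonzero)
   coefficient row vector (a, b, c), a representative of the point (a:b:c)
   of the dual plane; a point of P^2 is likewise a nonzero row vector. *)
Definition vec3 := 'rV[F]_3.

Definition mx3 (u v w : vec3) : 'M[F]_3 :=
  \matrix_(i < 3, j < 3)
     (if val i == 0%N then u ord0 j else if val i == 1%N then v ord0 j
      else w ord0 j).
Definition det3 (u v w : vec3) : F := \det (mx3 u v w).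

Definition proj_eq (u v : vec3) : Prop := exists c : F, u = c *: v.

Definition on_line (H p : vec3) : bool := \sum_(j < 3) H ord0 j * p ord0 j == 0.

Definition incidence (n : nat) (A : 'I_n -> vec3) : {set {set 'I_n}} :=
  [set T : {set 'I_n} | [exists i : 'I_n, exists j : 'I_n, exists k : 'I_n,
     [&& i != j, j != k, i != k, T == [set i; j; k] &
         det3 (A i) (A j) (A k) == 0]]].

Definition is_mult_point (n : nat) (A : 'I_n -> vec3) (p : vec3) : Prop :=
  p != 0 /\ exists i j k : 'I_n,
    [/\ i != j, j != k, i != k &
        [&& on_line (A i) p, on_line (A j) p & on_line (A k) p]].

Definition at_most_two_mult_on (n : nat) (A : 'I_n -> vec3) (H : vec3) : Prop :=
  ~ exists p1 p2 p3 : vec3,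
      [/\ is_mult_point A p1 /\ on_line H p1,
          is_mult_point A p2 /\ on_line H p2,
          is_mult_point A p3 /\ on_line H p3 &
          [/\ ~ proj_eq p1 p2, ~ proj_eq p2 p3 & ~ proj_eq p1 p3]].

(* realization space R(I), as the set of tuples of representatives
   (it is invariant under rescaling each H_i by a nonzero scalar) *)
Definition realization (n : nat) (I : {set {set 'I_n}}) (x : 'I_n -> vec3) : Prop :=
  [/\ forall i, x i != 0,
      forall i j, i != j -> ~ proj_eq (x i) (x j) &
      forall i j k, i != j -> j != k -> i != k ->
        ([set i; j; k] \in I <-> det3 (x i) (x j) (x k) = 0)].

Inductive mpoly (V : Type) : Type :=
| MVar of V
| MCst of F
| MAdd of mpoly V & mpoly V
| MMul of mpoly V & mpoly V
| MOpp of mpoly V.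

Fixpoint meval (V : Type) (e : V -> F) (f : mpoly V) : F :=
  match f with
  | MVar v => e v
  | MCst c => c
  | MAdd f g => meval e f + meval e g
  | MMul f g => meval e f * meval e g
  | MOpp f => - meval e f
  end.

(* polynomials in the 3n homogeneous coordinates of ((P^2)^* )^n *)
Definition cpoly (n : nat) := mpoly ('I_n * 'I_3).
Definition ceval (n : nat) (x : 'I_n -> vec3) (f : cpoly n) : F :=
  meval (fun ij => x ij.1 ord0 ij.2) f.

(* multihomogeneous polynomials: their vanishing at a point of
   ((P^2)^* )^n is well defined *)
Definition multihom (n : nat) (f : cpoly n) : Prop :=
  exists d : 'I_n -> nat, forall (lam : 'I_n -> F) (x : 'I_n -> vec3),
    ceval (fun i => lam i *: x i) f = (\prod_(i < n) lam i ^+ d i) * ceval x f.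

Definition zero_locus (n : nat) (S : cpoly n -> Prop) (x : 'I_n -> vec3) : Prop :=
  forall f, S f -> ceval x f = 0.

Definition zariski_irreducible (n : nat) (R : ('I_n -> vec3) -> Prop) : Prop :=
  (exists x, R x) /\
  forall S1 S2 : cpoly n -> Prop,
    (forall f, S1 f -> multihom f) -> (forall f, S2 f -> multihom f) ->
    (forall x, R x -> zero_locus S1 x \/ zero_locus S2 x) ->
    (forall x, R x -> zero_locus S1 x) \/ (forall x, R x -> zero_locus S2 x).

End LineArr.

(* Main.v *)
Require Import Defs.
From HB Require Import structures.
From mathcomp Require Import all_boot all_order all_algebra.
From Stdlib Require Import Ring Classical FunctionalExtensionality.
Import GRing.Theory.
Local Open Scope ring_scope.
Set Implicit Arguments. Unset Strict Implicit. Unset Printing Implicit Defensive.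

Section Main.
Variable F : closedFieldType.
Definition fadd (x y : F) : F := x + y.
Definition fmul (x y : F) : F := x * y.
Definition fopp (x : F) : F := - x.
Definition fsub (x y : F) : F := fadd x (fopp y).
Definition f0 : F := 0.
Definition f1 : F := 1.
Lemma Fring : @ring_theory F f0 f1 fadd fmul fsub fopp eq.
Proof.
rewrite /fsub /fadd /fmul /fopp /f0 /f1.
split=> *; rewrite ?add0r ?mul1r ?mulrA ?addrA ?subrr //; try apply: addrC; try apply: mulrC; apply: mulrDl.
Qed.
Add Ring Fring : Fring.
Ltac fnorm :=
  match goal with |- @eq _ ?a ?b => change (@eq F a b) end;
  repeat match goal with
  | |- context [@Algebra.add ?I ?x ?y] => change (@Algebra.add I x y) with (fadd x y)
  | |- context [@GRing.mul ?I ?x ?y] => change (@GRing.mul I x y) with (fmul x y)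
  | |- context [@Algebra.opp ?I ?x] => change (@Algebra.opp I x) with (fopp x)
  | |- context [@Algebra.zero ?I] => change (@Algebra.zero I) with f0
  | |- context [@GRing.one ?I] => change (@GRing.one I) with f1
  end.
Ltac fring := fnorm; ring.

Local Notation vec := ('rV[F]_3).
Implicit Types u v w p q h z : vec.
Definition ec (u : vec) (k : nat) : F := u ord0 (inord k).
Lemma ecE (u : vec) (j : 'I_3) : u ord0 j = ec u j.
Proof. by rewrite /ec inord_val. Qed.

Lemma vecP (u v : vec) : ec u 0%N = ec v 0%N -> ec u 1%N = ec v 1%N -> ec u 2%N = ec v 2%N -> u = v.
Proof.
move=> h0 h1 h2; apply/rowP => j; rewrite !ecE.
by case: j => [[|[|[|k]]] Hk] //=.
Qed.

Lemma det3E (u v w : vec) : det3 u v w =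
  ec u 0%N * (ec v 1%N * ec w 2%N - ec v 2%N * ec w 1%N)
  - ec u 1%N * (ec v 0%N * ec w 2%N - ec v 2%N * ec w 0%N)
  + ec u 2%N * (ec v 0%N * ec w 1%N - ec v 1%N * ec w 0%N).
Proof.
rewrite /det3 (expand_det_row _ ord0) !big_ord_recr big_ord0 /=.
rewrite /cofactor.
rewrite !(expand_det_row _ ord0) !big_ord_recr big_ord0 /= /cofactor.
rewrite !det_mx11 !mxE /=.
rewrite !big_ord0 !ecE /= !add0n ?expr0 ?expr1 ?expr2.
repeat match goal with |- context[bump ?a ?b] => let c := eval compute in (bump a b) in change (bump a b) with c end.
fring.
Qed.

Definition cross (u v : vec) : vec := \row_(k < 3)
  (if (k : nat) == 0%N then ec u 1%N * ec v 2%N - ec u 2%N * ec v 1%N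
   else if (k : nat) == 1%N then ec u 2%N * ec v 0%N - ec u 0%N * ec v 2%N
   else ec u 0%N * ec v 1%N - ec u 1%N * ec v 0%N).
Definition dot (u v : vec) : F := ec u 0%N * ec v 0%N + ec u 1%N * ec v 1%N + ec u 2%N * ec v 2%N.

Lemma ecX0 u v : ec (cross u v) 0%N = ec u 1%N * ec v 2%N - ec u 2%N * ec v 1%N.
Proof. by rewrite {1}/ec mxE inordK. Qed.
Lemma ecX1 u v : ec (cross u v) 1%N = ec u 2%N * ec v 0%N - ec u 0%N * ec v 2%N.
Proof. by rewrite {1}/ec mxE inordK. Qed.
Lemma ecX2 u v : ec (cross u v) 2%N = ec u 0%N * ec v 1%N - ec u 1%N * ec v 0%N.
Proof. by rewrite {1}/ec mxE inordK. Qed.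
Lemma ecZ (a : F) u k : ec (a *: u) k = a * ec u k.
Proof. by rewrite /ec mxE. Qed.
Lemma ecD u v k : ec (u + v) k = ec u k + ec v k.
Proof. by rewrite /ec mxE. Qed.
Lemma ecN u k : ec (- u) k = - ec u k.
Proof. by rewrite /ec mxE. Qed.
Lemma ecB u v k : ec (u - v) k = ec u k - ec v k.
Proof. by rewrite ecD ecN. Qed.
Lemma ec0 k : ec 0 k = 0.
Proof. by rewrite /ec mxE. Qed.

Ltac vsimp := rewrite ?det3E /dot ?(ecX0, ecX1, ecX2, ecZ, ecB, ecD, ecN, ec0).
Ltac vring := first [apply: vecP; vsimp; fring | vsimp; fring].

Lemma dot_cross u v w : dot w (cross u v) = det3 u v w.
Proof. vring. Qed.
Lemma det3_rep1 u v : det3 u v u = 0. Proof. vring. Qed.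
Lemma det3_rep2 u v : det3 u u v = 0. Proof. vring. Qed.
Lemma det3_rep3 u v : det3 u v v = 0. Proof. vring. Qed.
Lemma det3_sw12 u v w : det3 v u w = - det3 u v w. Proof. vring. Qed.
Lemma det3_sw23 u v w : det3 u w v = - det3 u v w. Proof. vring. Qed.
Lemma det3_sw13 u v w : det3 w v u = - det3 u v w. Proof. vring. Qed.
Lemma det3_cyc u v w : det3 v w u = det3 u v w. Proof. vring. Qed.
Lemma det3_cyc2 u v w : det3 w u v = det3 u v w. Proof. vring. Qed.
Lemma copl u v w p : det3 u v w *: p =
  dot u p *: cross v w + dot v p *: cross w u + dot w p *: cross u v.
Proof. vring. Qed.
Lemma bac h p q : cross h (cross p q) = dot h q *: p - dot h p *: q.
Proof. vring. Qed.
Lemma cross_sclL (c : F) v : cross (c *: v) v = 0. Proof. vring. Qed.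
Lemma dotZl (c : F) u v : dot (c *: u) v = c * dot u v. Proof. vring. Qed.
Lemma dotZr (c : F) u v : dot u (c *: v) = c * dot u v. Proof. vring. Qed.
Lemma det3Z (a b c : F) u v w : det3 (a *: u) (b *: v) (c *: w) = a * b * c * det3 u v w.
Proof. vring. Qed.
Lemma crossZ (a b : F) u v : cross (a *: u) (b *: v) = (a * b) *: cross u v.
Proof. vring. Qed.
Lemma dot_self_cross p z : dot (cross p z) p = 0. Proof. vring. Qed.
Lemma cross_cross_dotl p q : dot (cross p q) p = 0. Proof. vring. Qed.
Lemma cross_cross_dotr p q : dot (cross p q) q = 0. Proof. vring. Qed.
Lemma dotC u v : dot u v = dot v u. Proof. vring. Qed.


Lemma nz_coord u : u != 0 -> [\/ ec u 0%N != 0, ec u 1%N != 0 | ec u 2%N != 0].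
Proof.
move=> un.
case: (eqVneq (ec u 0%N) 0) => h0; last by constructor 1.
case: (eqVneq (ec u 1%N) 0) => h1; last by constructor 2.
case: (eqVneq (ec u 2%N) 0) => h2; last by constructor 3.
have u0 : u = 0 by apply: vecP; rewrite ec0.
by rewrite u0 eqxx in un.
Qed.

Lemma solve_div (a b c d : F) : d != 0 -> a * d = b * c -> a = b / d * c.
Proof. by move=> dn H; rewrite mulrAC -H mulfK. Qed.

Ltac zby E := first [apply: subr0_eq; rewrite -E; fring | apply: esym; apply: subr0_eq; rewrite -E; fring].

Lemma PL u w : w != 0 -> cross u w = 0 -> proj_eq u w.
Proof.
move=> wn0 H.
have c0 k : ec (cross u w) k = 0 by rewrite H ec0.
have e0 := c0 0%N; have e1 := c0 1%N; have e2 := c0 2%N.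
rewrite ?ecX0 ?ecX1 ?ecX2 in e0 e1 e2.
case: (nz_coord wn0) => h.
- exists (ec u 0%N / ec w 0%N); apply: vecP; rewrite ecZ.
  + by rewrite divfK.
  + apply: solve_div => //; zby e2.
  + apply: solve_div => //; zby e1.
- exists (ec u 1%N / ec w 1%N); apply: vecP; rewrite ecZ.
  + apply: solve_div => //; zby e2.
  + by rewrite divfK.
  + apply: solve_div => //; zby e0.
- exists (ec u 2%N / ec w 2%N); apply: vecP; rewrite ecZ.
  + apply: solve_div => //; zby e1.
  + apply: solve_div => //; zby e0.
  + by rewrite divfK.
Qed.

Lemma cross_neq0 u w : w != 0 -> ~ proj_eq u w -> cross u w != 0.
Proof. by move=> wn np; apply/eqP => /(PL wn). Qed.

Lemma proj_cross u w : proj_eq u w -> cross u w = 0.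
Proof. by case=> c ->; rewrite cross_sclL. Qed.

Lemma on_lineE H p : on_line H p = (dot H p == 0).
Proof.
rewrite /on_line !big_ord_recr big_ord0 /= add0r !ecE /=.
by [].
Qed.

Definition pol V (g : (V -> F) -> F) := exists e : mpoly F V, forall a, meval a e = g a.

Lemma meval_ext V (e1 e2 : V -> F) (f : mpoly F V) :
  (forall y, e1 y = e2 y) -> meval e1 f = meval e2 f.
Proof. by move=> H; elim: f => /= [y|c|f IH g IG|f IH g IG|f IH]; rewrite ?H ?IH ?IG. Qed.

Lemma pol_ext V (g g' : (V -> F) -> F) : pol g -> (forall a, g a = g' a) -> pol g'.
Proof. by move=> [e E] H; exists e => a; rewrite E H. Qed.
Lemma pol_const V (c : F) : pol (fun _ : V -> F => c).
Proof. by exists (MCst V c). Qed.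
Lemma pol_var V (y : V) : pol (fun a => a y).
Proof. by exists (MVar F y). Qed.
Lemma pol_add V (g1 g2 : (V -> F) -> F) : pol g1 -> pol g2 -> pol (fun a => g1 a + g2 a).
Proof. by case=> e1 E1 [e2 E2]; exists (MAdd e1 e2) => a /=; rewrite E1 E2. Qed.
Lemma pol_mul V (g1 g2 : (V -> F) -> F) : pol g1 -> pol g2 -> pol (fun a => g1 a * g2 a).
Proof. by case=> e1 E1 [e2 E2]; exists (MMul e1 e2) => a /=; rewrite E1 E2. Qed.
Lemma pol_opp V (g1 : (V -> F) -> F) : pol g1 -> pol (fun a => - g1 a).
Proof. by case=> e1 E1; exists (MOpp e1) => a /=; rewrite E1. Qed.
Lemma pol_sub V (g1 g2 : (V -> F) -> F) : pol g1 -> pol g2 -> pol (fun a => g1 a - g2 a).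
Proof. by move=> h1 h2; apply: pol_add => //; apply: pol_opp. Qed.
Lemma pol_prod V (I : Type) (r : seq I) (P : pred I) (G : I -> (V -> F) -> F) :
  (forall i, pol (G i)) -> pol (fun a => \prod_(i <- r | P i) G i a).
Proof.
move=> HG; elim: r => [|x r IH].
  by apply: (pol_ext (pol_const _ 1)) => a; rewrite big_nil.
case Px: (P x).
  by apply: (pol_ext (pol_mul (HG x) IH)) => a; rewrite big_cons Px.
by apply: (pol_ext IH) => a; rewrite big_cons Px.
Qed.
Lemma pol_meval V W (e : mpoly F W) (s : W -> (V -> F) -> F) :
  (forall x, pol (s x)) -> pol (fun a => meval (fun x => s x a) e).
Proof.
move=> Hs; elim: e => /= [x|c|f IH g IG|f IH g IG|f IH].
- exact: Hs.
- exact: pol_const.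
- exact: pol_add.
- exact: pol_mul.
- exact: pol_opp.
Qed.

Definition polv V (u : (V -> F) -> vec) := forall k, pol (fun a => ec (u a) k).
Lemma polv_const V (c : vec) : polv (fun _ : V -> F => c).
Proof. by move=> k; apply: pol_const. Qed.
Lemma polv_cross V (u w : (V -> F) -> vec) : polv u -> polv w -> polv (fun a => cross (u a) (w a)).
Proof.
move=> hu hw k; rewrite /cross /ec.
apply: (@pol_ext _ (fun a => if (inord k : 'I_3) == 0%N :> nat then
     ec (u a) 1%N * ec (w a) 2%N - ec (u a) 2%N * ec (w a) 1%N
   else if (inord k : 'I_3) == 1%N :> nat then ec (u a) 2%N * ec (w a) 0%N - ec (u a) 0%N * ec (w a) 2%N
   else ec (u a) 0%N * ec (w a) 1%N - ec (u a) 1%N * ec (w a) 0%N)); last by move=> a; rewrite mxE.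
by move: ((inord k : 'I_3) == 0%N :> nat) ((inord k : 'I_3) == 1%N :> nat) => [] [] /=; apply: pol_sub; apply: pol_mul.
Qed.
Lemma polv_scale V (c : (V -> F) -> F) (u : (V -> F) -> vec) : pol c -> polv u -> polv (fun a => c a *: u a).
Proof. move=> hc hu k; apply: (pol_ext (pol_mul hc (hu k))) => a; by rewrite ecZ. Qed.
Lemma pol_det V (u v w : (V -> F) -> vec) : polv u -> polv v -> polv w -> pol (fun a => det3 (u a) (v a) (w a)).
Proof.
move=> hu hv hw; apply: (@pol_ext _ (fun a => ec (u a) 0%N * (ec (v a) 1%N * ec (w a) 2%N - ec (v a) 2%N * ec (w a) 1%N)
  - ec (u a) 1%N * (ec (v a) 0%N * ec (w a) 2%N - ec (v a) 2%N * ec (w a) 0%N)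
  + ec (u a) 2%N * (ec (v a) 0%N * ec (w a) 1%N - ec (v a) 1%N * ec (w a) 0%N))); last by move=> a; rewrite det3E.
by repeat (apply: pol_sub || apply: pol_add || apply: pol_mul || apply: hu || apply: hv || apply: hw).
Qed.
Lemma pol_dot V (u v : (V -> F) -> vec) : polv u -> polv v -> pol (fun a => dot (u a) (v a)).
Proof. move=> hu hv; rewrite /dot; by repeat (apply: pol_add || apply: pol_mul || apply: hu || apply: hv). Qed.

(* infinite field *)
Hypothesis charF0 : [pchar F] =i pred0.

Lemma natF_inj (i j : nat) : (i%:R : F) = j%:R -> i = j.
Proof.
have H n : ((n%:R : F) == 0) = (n == 0)%N by apply: (pcharf0P F).1.
move=> /eqP; rewrite -subr_eq0.
have [h|h] := leqP i j.
  rewrite -opprB -natrB // oppr_eq0 H subn_eq0 => h'; apply/eqP; by rewrite eqn_leq h h'.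
rewrite -natrB ?(ltnW h) // H subn_eq0 => h'; by move: (leq_ltn_trans h' h); rewrite ltnn.
Qed.

Lemma nonroot (p : {poly F}) : p != 0 -> exists t, p.[t] != 0.
Proof.
move=> pn; apply: NNPP => H.
have allr : forall t, p.[t] = 0.
  by move=> t; apply: NNPP => Ht; apply: H; exists t; apply/eqP.
set rs := [seq (i%:R : F) | i <- iota 0 (size p)].
have : (size rs < size p)%N.
  apply: max_poly_roots => //.
    by apply/allP => x _; rewrite /root allr.
  rewrite map_inj_uniq ?iota_uniq //; exact: natF_inj.
by rewrite size_map size_iota ltnn.
Qed.

Fixpoint lpoly V (a d : V -> F) (e : mpoly F V) : {poly F} :=
  match e with
  | MVar y => (a y)%:P + (d y)%:P * 'X
  | MCst c => c%:P
  | MAdd e1 e2 => lpoly a d e1 + lpoly a d e2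
  | MMul e1 e2 => lpoly a d e1 * lpoly a d e2
  | MOpp e1 => - lpoly a d e1
  end.
Lemma lpolyE V (a d : V -> F) e t : (lpoly a d e).[t] = meval (fun y => a y + t * d y) e.
Proof.
elim: e => /= [y|c|f IH g IG|f IH g IG|f IH]; rewrite ?hornerE ?IH ?IG //.
by rewrite mulrC.
Qed.

Lemma L1 V (g1 g2 : (V -> F) -> F) : pol g1 -> pol g2 ->
  (exists a, g1 a != 0) -> (exists b, g2 b != 0) -> exists c, g1 c * g2 c != 0.
Proof.
case=> e1 E1 [e2 E2] [a A] [b B].
pose d := fun y => b y - a y.
have h1 : (lpoly a d e1).[0] = g1 a.
  by rewrite lpolyE -E1; apply: meval_ext => y; rewrite mul0r addr0.
have h2 : (lpoly a d e2).[1] = g2 b.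
  by rewrite lpolyE -E2; apply: meval_ext => y; rewrite mul1r /d addrC subrK.
have n1 : lpoly a d e1 != 0 by apply: contraNneq A => h; rewrite -h1 h horner0.
have n2 : lpoly a d e2 != 0 by apply: contraNneq B => h; rewrite -h2 h horner0.
have [t Ht] := nonroot (mulf_neq0 n1 n2).
exists (fun y => a y + t * d y).
by rewrite -E1 -E2 -!lpolyE -hornerM.
Qed.


Lemma cross_sclR (c : F) v : cross v (c *: v) = 0. Proof. vring. Qed.

Definition pm n (lam : 'I_n -> F) (d : 'I_n -> nat) : F := \prod_(i < n) lam i ^+ d i.
Definition hom n (g : ('I_n -> vec) -> F) :=
  exists d, forall lam x, g (fun i => lam i *: x i) = pm lam d * g x.
Definition homv n (g : ('I_n -> vec) -> vec) :=
  exists d, forall lam x, g (fun i => lam i *: x i) = pm lam d *: g x.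

Lemma pmD n (lam : 'I_n -> F) d1 d2 : pm lam (fun i => (d1 i + d2 i)%N) = pm lam d1 * pm lam d2.
Proof. by rewrite /pm -big_split; apply: eq_bigr => i _; rewrite exprD. Qed.
Lemma pm0 n (lam : 'I_n -> F) : pm lam (fun _ => 0%N) = 1.
Proof. by rewrite /pm big1 // => i _; rewrite expr0. Qed.
Lemma pm_var n (lam : 'I_n -> F) j : pm lam (fun i => nat_of_bool (i == j)) = lam j.
Proof.
rewrite /pm (bigD1 j) //= eqxx expr1 big1 ?mulr1 // => i /negbTE ->.
by rewrite expr0.
Qed.
Lemma pmX n (lam : 'I_n -> F) d c : pm lam d ^+ c = pm lam (fun i => (d i * c)%N).
Proof. by rewrite /pm -prodrXl; apply: eq_bigr => i _; rewrite exprM. Qed.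

Lemma hom_const n (c : F) : hom (fun _ : 'I_n -> vec => c).
Proof. by exists (fun _ => 0%N) => lam x; rewrite pm0 mul1r. Qed.
Lemma hom_mul n (g1 g2 : ('I_n -> vec) -> F) : hom g1 -> hom g2 -> hom (fun x => g1 x * g2 x).
Proof.
case=> d1 H1 [d2 H2]; exists (fun i => (d1 i + d2 i)%N) => lam x.
by rewrite H1 H2 pmD mulrACA.
Qed.
Lemma hom_ext n (g g' : ('I_n -> vec) -> F) : hom g -> (forall x, g x = g' x) -> hom g'.
Proof. by case=> d H E; exists d => lam x; rewrite -!E H. Qed.
Lemma hom_prod n (I : Type) (r : seq I) (P : pred I) (G : I -> ('I_n -> vec) -> F) :
  (forall i, hom (G i)) -> hom (fun x => \prod_(i <- r | P i) G i x).
Proof.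
move=> HG; elim: r => [|y r IH].
  by apply: (hom_ext (hom_const _ 1)) => x; rewrite big_nil.
case Py: (P y).
  by apply: (hom_ext (hom_mul (HG y) IH)) => x; rewrite big_cons Py.
by apply: (hom_ext IH) => x; rewrite big_cons Py.
Qed.
Lemma homv_var n (j : 'I_n) : homv (fun x : 'I_n -> vec => x j).
Proof. by exists (fun i => nat_of_bool (i == j)) => lam x; rewrite pm_var. Qed.
Lemma homv_const0 n (c : vec) : homv (fun _ : 'I_n -> vec => c).
Proof. by exists (fun _ => 0%N) => lam x; rewrite pm0 scale1r. Qed.
Lemma homv_cross n (u w : ('I_n -> vec) -> vec) : homv u -> homv w -> homv (fun x => cross (u x) (w x)).
Proof.
case=> d1 H1 [d2 H2]; exists (fun i => (d1 i + d2 i)%N) => lam x.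
by rewrite H1 H2 crossZ pmD.
Qed.
Lemma homv_scale n (c : ('I_n -> vec) -> F) (u : ('I_n -> vec) -> vec) :
  hom c -> homv u -> homv (fun x => c x *: u x).
Proof.
case=> d1 H1 [d2 H2]; exists (fun i => (d1 i + d2 i)%N) => lam x.
by rewrite H1 H2 scalerA pmD scalerA mulrAC.
Qed.
Lemma hom_ec n (u : ('I_n -> vec) -> vec) k : homv u -> hom (fun x => ec (u x) k).
Proof. by case=> d H; exists d => lam x; rewrite H ecZ. Qed.
Lemma hom_det n (u v w : ('I_n -> vec) -> vec) : homv u -> homv v -> homv w ->
  hom (fun x => det3 (u x) (v x) (w x)).
Proof.
case=> d1 H1 [d2 H2] [d3 H3]; exists (fun i => (d1 i + d2 i + d3 i)%N) => lam x.
by rewrite H1 H2 H3 det3Z !pmD.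
Qed.

Lemma zsym u v w : det3 u v w = 0 ->
  [/\ det3 v u w = 0, det3 u w v = 0, det3 w v u = 0, det3 v w u = 0 & det3 w u v = 0].
Proof.
move=> d; split.
- by rewrite det3_sw12 d oppr0.
- by rewrite det3_sw23 d oppr0.
- by rewrite det3_sw13 d oppr0.
- by rewrite det3_cyc d.
- by rewrite det3_cyc2 d.
Qed.

Lemma IL n (B : 'I_n -> vec) i j k : i != j -> j != k -> i != k ->
  ([set i; j; k] \in incidence B) <-> det3 (B i) (B j) (B k) = 0.
Proof.
move=> ij jk ik; split.
- rewrite inE => /existsP [i' /existsP [j' /existsP [k' /and5P [ij' jk' ik' /eqP E /eqP d]]]].
  have Hi : i' \in [set i; j; k] by rewrite E !inE eqxx.
  have Hj : j' \in [set i; j; k] by rewrite E !inE eqxx ?orbT.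
  have Hk : k' \in [set i; j; k] by rewrite E !inE eqxx ?orbT.
  move: Hi Hj Hk d ij' jk' ik'; rewrite !inE -!orbA.
  by case/or3P => /eqP -> /or3P [] /eqP -> /or3P [] /eqP -> d; rewrite ?eqxx //;
    case: (zsym d) => *.
- move=> d; rewrite inE; apply/existsP; exists i; apply/existsP; exists j; apply/existsP; exists k.
  by rewrite ij jk ik eqxx /=; apply/eqP.
Qed.

Lemma iff_b (x y : F) : (x == 0) = (y == 0) -> (x = 0 <-> y = 0).
Proof. by move=> H; split => h; apply/eqP; [rewrite -H | rewrite H]; apply/eqP. Qed.
Lemma b_iff (x y : F) : (x = 0 <-> y = 0) -> (x == 0) = (y == 0).
Proof. by move=> H; apply/idP/idP => /eqP /H /eqP. Qed.
Lemma zb12 u v w : (det3 v u w == 0) = (det3 u v w == 0).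
Proof. by rewrite det3_sw12 oppr_eq0. Qed.
Lemma zbcyc u v w : (det3 v w u == 0) = (det3 u v w == 0).
Proof. by rewrite det3_cyc. Qed.
Lemma Psw12 (a b c a' b' c' : vec) : (det3 a b c == 0) = (det3 a' b' c' == 0) ->
  (det3 b a c == 0) = (det3 b' a' c' == 0).
Proof. by rewrite (zb12 a b c) (zb12 a' b' c'). Qed.
Lemma Pcyc (a b c a' b' c' : vec) : (det3 a b c == 0) = (det3 a' b' c' == 0) ->
  (det3 b c a == 0) = (det3 b' c' a' == 0).
Proof. by rewrite (zbcyc a b c) (zbcyc a' b' c'). Qed.


Lemma crossC u v : cross u v = - cross v u. Proof. vring. Qed.
Lemma det3Z3 u v (c : F) w : det3 u v (c *: w) = c * det3 u v w. Proof. vring. Qed.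
Lemma ec_row (E : 'I_3 -> F) k : ec (\row_j E j) k = E (inord k).
Proof. by rewrite /ec mxE. Qed.

Variable m : nat.
Variable A : 'I_m.+1 -> vec.
Hypothesis hA0 : forall i, A i != 0.
Hypothesis hAdist : forall i j, i != j -> ~ proj_eq (A i) (A j).
Hypothesis hmult : at_most_two_mult_on A (A ord_max).

Local Notation wd := (widen_ord (leqnSn m)).
Definition Ap (i : 'I_m) := A (wd i).
Local Notation R := (realization (incidence A)).
Local Notation R' := (realization (incidence Ap)).

Lemma wd_lift i : wd i = lift ord_max i.
Proof. by apply/val_inj; rewrite /= /bump leqNgt ltn_ord. Qed.
Lemma caseI (i : 'I_m.+1) : (exists j, i = wd j) \/ i = ord_max.
Proof.
case: (unliftP ord_max i) => [j ->|->]; last by right.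
by left; exists j; rewrite wd_lift.
Qed.
Lemma wd_eq i j : (wd i == wd j) = (i == j).
Proof. by rewrite -val_eqE /= val_eqE. Qed.
Lemma wd_max j : wd j != ord_max.
Proof. by rewrite -val_eqE /= neq_ltn ltn_ord. Qed.
Lemma max_wd j : ord_max != wd j.
Proof. by rewrite eq_sym wd_max. Qed.

Definition ext (x : 'I_m -> vec) (h : vec) : 'I_m.+1 -> vec :=
  fun i => if unlift ord_max i is Some j then x j else h.
Lemma ext_wd x h j : ext x h (wd j) = x j.
Proof. by rewrite /ext wd_lift liftK. Qed.
Lemma ext_max x h : ext x h ord_max = h.
Proof. by rewrite /ext unlift_none. Qed.

Lemma realA : R A.
Proof. split; [exact: hA0 | exact: hAdist | move=> i j k ij jk ik; exact: IL]. Qed.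

Lemma realR (x : 'I_m.+1 -> vec) : R x -> R' (fun i => x (wd i)).
Proof.
case=> h1 h2 h3; split.
- by move=> i; apply: h1.
- by move=> i j ij; apply: h2; rewrite wd_eq.
- move=> i j k ij jk ik.
  apply: iff_trans (IL Ap ij jk ik) _.
  rewrite /Ap -(IL A) ?wd_eq //.
  exact: h3.
Qed.

Lemma TR (x : 'I_m -> vec) a b c : R' x -> a != b ->
  (det3 (Ap a) (Ap b) (Ap c) = 0 <-> det3 (x a) (x b) (x c) = 0).
Proof.
case=> _ _ h3 ab.
case: (eqVneq c a) => [->|ca]; first by rewrite !det3_rep1.
case: (eqVneq c b) => [->|cb]; first by rewrite !det3_rep3.
apply: iff_trans (iff_sym (IL Ap ab _ _)) _; rewrite 1?eq_sym //.
by apply: h3; rewrite // eq_sym.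
Qed.

Lemma realE (x : 'I_m -> vec) h : R' x -> h != 0 -> (forall i, cross h (x i) != 0) ->
  (forall i j, i != j -> (det3 (x i) (x j) h = 0 <-> det3 (Ap i) (Ap j) (A ord_max) = 0)) ->
  R (ext x h).
Proof.
case=> h1 h2 h3 hn hc hd; split.
- move=> i; case: (caseI i) => [[j ->]|->]; by rewrite ?ext_wd ?ext_max.
- move=> i j; case: (caseI i) => [[i' ->]|->]; case: (caseI j) => [[j' ->]|->];
    rewrite ?ext_wd ?ext_max ?wd_eq ?eqxx //.
  + by move=> ij; apply: h2.
  + by move=> _ /proj_cross H; move: (hc i'); rewrite crossC H oppr0 eqxx.
  + by move=> _ /proj_cross H; move: (hc j'); rewrite H eqxx.
- move=> i j k ij jk ik; apply: iff_trans (IL A ij jk ik) _; apply: iff_b.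
  case: (caseI i) ij ik => [[i' ->]|->]; case: (caseI j) jk => [[j' ->]|->];
    case: (caseI k) => [[k' ->]|->]; rewrite ?ext_wd ?ext_max ?wd_eq ?wd_max ?max_wd ?eqxx //.
  + move=> jk ij ik; apply: b_iff; apply: iff_trans (iff_sym (IL Ap ij jk ik)) _.
    exact: h3.
  + move=> _ ij _; apply: esym; apply: b_iff; exact: hd.
  + move=> _ _ ik; apply: Pcyc; apply: Psw12; apply: esym; apply: b_iff; exact: hd.
  + move=> jk _ _; apply: Pcyc; apply: Pcyc; apply: esym; apply: b_iff; exact: hd.
Qed.

Definition nE (p : 'I_m * 'I_m) : bool := (p.1 != p.2) && (det3 (Ap p.1) (Ap p.2) (A ord_max) != 0).
Definition cond (x : 'I_m -> vec) h (k0 : nat) (kk : 'I_m -> nat) : F :=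
  (\prod_(p | nE p) det3 (x p.1) (x p.2) h) * ec h k0 * \prod_(i < m) ec (cross h (x i)) (kk i).

Lemma cond_sound x h k0 kk : cond x h k0 kk != 0 ->
  [/\ h != 0, forall i, cross h (x i) != 0 & forall i j, nE (i, j) -> det3 (x i) (x j) h != 0].
Proof.
rewrite /cond !mulf_eq0 !negb_or => /andP [/andP [/prodf_neq0 H1 H2] /prodf_neq0 H3]; split.
- by apply: contraNneq H2 => ->; rewrite ec0.
- by move=> i; have := H3 i isT; apply: contraNneq => ->; rewrite ec0.
- by move=> i j Hij; apply: (H1 (i, j)).
Qed.

Definition pick u : nat := if ec u 0%N != 0 then 0%N else if ec u 1%N != 0 then 1%N else 2%N.
Lemma pick_ok u : u != 0 -> ec u (pick u) != 0.
Proof.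
rewrite /pick => /nz_coord [] H; rewrite ?H //;
  by case: ifP => // /negbFE /eqP; case: ifP => // /negbFE /eqP.
Qed.

Lemma cond_complete x h : h != 0 -> (forall i, cross h (x i) != 0) ->
  (forall i j, nE (i, j) -> det3 (x i) (x j) h != 0) ->
  exists k0 kk, cond x h k0 kk != 0.
Proof.
move=> hn hc hd; exists (pick h), (fun i => pick (cross h (x i))).
rewrite /cond !mulf_neq0 ?pick_ok //.
  by apply/prodf_neq0 => [[i j]] /hd.
by apply/prodf_neq0 => i _; apply: pick_ok.
Qed.

Section Param.
Variable phi : ('I_m -> vec) -> vec -> vec.
Hypothesis phi_pol : forall V (X : (V -> F) -> 'I_m -> vec) (Z : (V -> F) -> vec),
  (forall i, polv (fun a => X a i)) -> polv Z -> polv (fun a => phi (X a) (Z a)).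
Hypothesis phi_hom : forall z, homv (fun x => phi x z).
Hypothesis phi_van : forall x, R' x -> forall i j z, i != j ->
  det3 (Ap i) (Ap j) (A ord_max) = 0 -> det3 (x i) (x j) (phi x z) = 0.
Hypothesis phi_surj : forall x, R x -> exists z c, x ord_max = c *: phi (fun i => x (wd i)) z.

Definition G (f : cpoly F m.+1) z k0 kk (x : 'I_m -> vec) : F :=
  ceval (ext x (phi x z)) f * cond x (phi x z) k0 kk.

Lemma Gpol_gen f k0 kk V (X : (V -> F) -> 'I_m -> vec) (Z : (V -> F) -> vec) :
  (forall i, polv (fun a => X a i)) -> polv Z -> pol (fun a => G f (Z a) k0 kk (X a)).
Proof.
move=> hX hZ; have hP := phi_pol hX hZ.
apply: pol_mul.
  apply: (@pol_ext _ (fun a => meval (fun ij => ext (X a) (phi (X a) (Z a)) ij.1 ord0 ij.2) f)) => // .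
  apply: pol_meval => [[i j]] /=; rewrite /ext.
  case: (unlift ord_max i) => [i'|].
    by apply: (pol_ext (hX i' j)) => a; rewrite ecE.
  by apply: (pol_ext (hP j)) => a; rewrite ecE.
apply: pol_mul; first apply: pol_mul.
- apply: pol_prod => p; apply: pol_det => //; exact: hX.
- exact: hP.
- apply: pol_prod => i; apply: (pol_ext (polv_cross hP (hX i) (kk i))) => a //.
Qed.

Lemma Ghom f z k0 kk : multihom f -> hom (fun x => G f z k0 kk x).
Proof.
move=> [d Hd]; apply: hom_mul.
  have [dp Hp] := phi_hom z.
  exists (fun i => (d (wd i) + dp i * d ord_max)%N) => lam x.
  rewrite Hp.
  pose lam' (i : 'I_m.+1) := if unlift ord_max i is Some j then lam j else pm lam dp.
  have -> : ceval (ext (fun i => lam i *: x i) (pm lam dp *: phi x z)) f =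
            ceval (fun i => lam' i *: ext x (phi x z) i) f.
    by apply: meval_ext => [[i j]] /=; rewrite /ext /lam'; case: (unlift ord_max i).
  rewrite (Hd lam'); congr (_ * _).
  rewrite /pm big_ord_recr /= /lam' unlift_none -/(pm lam dp) pmX.
  rewrite /pm -big_split /=; apply: eq_bigr => i _.
  by rewrite exprD wd_lift liftK.
rewrite /cond; apply: hom_mul; first apply: hom_mul.
- apply: hom_prod => p; apply: hom_det; [exact: homv_var | exact: homv_var | exact: phi_hom].
- exact: hom_ec.
- apply: hom_prod => i; apply: hom_ec; apply: homv_cross; [exact: phi_hom | exact: homv_var].
Qed.

Lemma Gpoly f z k0 kk : exists t : cpoly F m, forall x, ceval x t = G f z k0 kk x.
Proof.
have := @Gpol_gen f k0 kk ('I_m * 'I_3) (fun a i => \row_j a (i, j)) (fun _ => z).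
case.
- by move=> i k; apply: (pol_ext (pol_var (i, inord k))) => a; rewrite ec_row.
- exact: polv_const.
move=> e He; exists e => x; rewrite /ceval He; congr G.
by apply: functional_extensionality => i; apply/rowP => j; rewrite mxE.
Qed.

Lemma Gpol_loc f k0 kk x : pol (fun a : 'I_3 -> F => G f (\row_j a j) k0 kk x).
Proof.
apply: (@Gpol_gen f k0 kk 'I_3 (fun _ => x) (fun a => \row_j a j)).
- by move=> i; apply: polv_const.
- by move=> k; apply: (pol_ext (pol_var (inord k))) => a; rewrite ec_row.
Qed.

Lemma neq0_mul (a b : F) : a * b != 0 -> a != 0 /\ b != 0.
Proof. by rewrite mulf_eq0 negb_or => /andP. Qed.

Lemma nzl n (S : cpoly F n -> Prop) x : ~ zero_locus S x -> exists t, S t /\ ceval x t != 0.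
Proof.
move=> H; apply: NNPP => H'; apply: H => t St; apply/eqP; apply: negbNE; apply/negP => Hn.
by apply: H'; exists t.
Qed.

Theorem main_sec : zariski_irreducible (F:=F) (realization (incidence Ap)) ->
  zariski_irreducible (F:=F) (realization (incidence A)).
Proof.
case=> _ irr'; split; first by exists A; exact: realA.
move=> S1 S2 hS1 hS2 cov.
pose T (S : cpoly F m.+1 -> Prop) (t : cpoly F m) :=
  exists f z k0 kk, S f /\ forall x, ceval x t = G f z k0 kk x.
have Tmh : forall S, (forall f, S f -> multihom f) -> forall t, T S t -> multihom t.
  move=> S hS t [f [z [k0 [kk [Sf Et]]]]].
  have [d H] := Ghom z k0 kk (hS f Sf).
  by exists d => lam x; rewrite !Et; exact: H.
have back : forall S, (forall f, S f -> multihom f) ->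
    (forall x, R' x -> zero_locus (T S) x) -> forall x, R x -> zero_locus S x.
  move=> S hS HT x Rx f Sf.
  pose x' := fun i => x (wd i).
  have R'x : R' x' := realR Rx.
  have [z [c Ec]] := phi_surj Rx.
  case: (Rx) => r1 r2 r3.
  pose h := phi x' z.
  have hn : h != 0.
    by apply: contraNneq (r1 ord_max) => h0; rewrite Ec -/h h0 scaler0.
  have hc : forall i, cross h (x' i) != 0.
    move=> i; apply/negP => /eqP /(PL (r1 (wd i))) [k Ek].
    apply: (r2 ord_max (wd i) (max_wd i)); exists (c * k).
    by rewrite Ec -/h Ek scalerA.
  have hd : forall i j, nE (i, j) -> det3 (x' i) (x' j) h != 0.
    move=> i j /andP /= [ij dA]; apply/negP => /eqP d0.
    have ij' : wd i != wd j by rewrite wd_eq.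
    have := (r3 (wd i) (wd j) ord_max ij' (wd_max j) (wd_max i)).2.
    rewrite Ec det3Z3 -/h -/x' d0 mulr0 => /(_ erefl) /(IL A ij' (wd_max j) (wd_max i)) /eqP.
    by rewrite (negbTE dA).
  have [k0 [kk Hc]] := cond_complete hn hc hd.
  have [t Et] := Gpoly f z k0 kk.
  have : ceval x' t = 0.
    by apply: (HT x' R'x t); exists f, z, k0, kk.
  rewrite Et /G -/h => /eqP; rewrite mulf_eq0 (negbTE Hc) orbF => /eqP H0.
  have [d Hd] := hS f Sf.
  pose lam (i : 'I_m.+1) := if i == ord_max then c else 1.
  have -> : ceval x f = ceval (fun i => lam i *: ext x' h i) f.
    apply: meval_ext => [[i j]] /=; rewrite /lam.
    case: (caseI i) => [[i' ->]|->].
      by rewrite (negbTE (wd_max i')) scale1r ext_wd.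
    by rewrite eqxx ext_max Ec.
  by rewrite Hd H0 mulr0.
have cover' : forall x, R' x -> zero_locus (T S1) x \/ zero_locus (T S2) x.
  move=> x Rx; apply: NNPP => Hn.
  have [t1 [[f1 [z1 [k1 [kk1 [Sf1 E1]]]]] N1]] : exists t, T S1 t /\ ceval x t != 0.
    by apply: nzl => H; apply: Hn; left.
  have [t2 [[f2 [z2 [k2 [kk2 [Sf2 E2]]]]] N2]] : exists t, T S2 t /\ ceval x t != 0.
    by apply: nzl => H; apply: Hn; right.
  rewrite E1 in N1; rewrite E2 in N2.
  have rowz (z : vec) : \row_j (fun j0 => z ord0 j0) j = z by apply/rowP => j; rewrite mxE.
  have [c Hc] := L1 (Gpol_loc f1 k1 kk1 x) (Gpol_loc f2 k2 kk2 x)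
    (ex_intro _ (fun j => z1 ord0 j) (eq_ind_r (fun v => G f1 v k1 kk1 x != 0) N1 (rowz z1)))
    (ex_intro _ (fun j => z2 ord0 j) (eq_ind_r (fun v => G f2 v k2 kk2 x != 0) N2 (rowz z2))).
  move: Hc; rewrite /G; set h := phi x (\row_j c j).
  case/neq0_mul => /neq0_mul [F1 C1] /neq0_mul [F2 C2].
  have [hn hc hd] := cond_sound C1.
  have Rh : R (ext x h).
    apply: realE => // i j ij; split.
      move=> d0; apply: NNPP => dA; move: (hd i j); rewrite /nE /= ij d0 eqxx /=.
      by move/(_ (introN eqP dA)).
    by move=> dA; rewrite /h; apply: phi_van.
  case: (cov _ Rh) => H.
    by move: F1; rewrite (H f1 Sf1) eqxx.
  by move: F2; rewrite (H f2 Sf2) eqxx.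
have [H|H] := irr' (T S1) (T S2) (Tmh _ hS1) (Tmh _ hS2) cover'.
  by left; apply: back.
by right; apply: back.
Qed.
End Param.

Definition Ppol (phi : ('I_m -> vec) -> vec -> vec) := forall V (X : (V -> F) -> 'I_m -> vec) (Z : (V -> F) -> vec),
  (forall i, polv (fun a => X a i)) -> polv Z -> polv (fun a => phi (X a) (Z a)).
Definition Phom (phi : ('I_m -> vec) -> vec -> vec) := forall z, homv (fun x => phi x z).
Definition Pvan (phi : ('I_m -> vec) -> vec -> vec) := forall x, R' x -> forall i j z, i != j ->
  det3 (Ap i) (Ap j) (A ord_max) = 0 -> det3 (x i) (x j) (phi x z) = 0.
Definition Psurj (phi : ('I_m -> vec) -> vec -> vec) :=
  forall x, R x -> exists z c, x ord_max = c *: phi (fun i => x (wd i)) z.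

Lemma copl0 u v w p : p != 0 -> dot u p = 0 -> dot v p = 0 -> dot w p = 0 -> det3 u v w = 0.
Proof.
move=> pn hu hv hw; apply/eqP.
have : det3 u v w *: p == 0 by rewrite copl hu hv hw !scale0r !addr0.
by rewrite scaler_eq0 (negbTE pn) orbF.
Qed.

Lemma thru_of u v w p : proj_eq (cross u v) p -> dot w p = 0 -> det3 u v w = 0.
Proof. by case=> k E H; rewrite -dot_cross E dotZr H mulr0. Qed.

Definition bv (k : nat) : vec := \row_(j < 3) (if (j : nat) == k then 1 else 0).
Lemma ec_bv k j : (j < 3)%N -> ec (bv k) j = if j == k then 1 else 0.
Proof. by move=> hj; rewrite /ec mxE inordK. Qed.

Lemma nzx (x : 'I_m -> vec) a b : R' x -> a != b -> cross (x a) (x b) != 0.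
Proof. by case=> r1 r2 _ ab; apply: cross_neq0; [apply: r1 | apply: r2]. Qed.

Lemma Edet (x : 'I_m.+1 -> vec) a b : R x -> a != b -> det3 (Ap a) (Ap b) (A ord_max) = 0 ->
  det3 (x (wd a)) (x (wd b)) (x ord_max) = 0.
Proof.
case=> _ _ r3 ab dA.
have ab' : wd a != wd b by rewrite wd_eq.
apply/(r3 _ _ _ ab' (wd_max b) (wd_max a)).
exact/(IL A ab' (wd_max b) (wd_max a)).
Qed.

(* basis vector trick: h ⊥ p, p != 0 gives h in the image of z |-> p x z *)
Lemma surj1 p h : p != 0 -> dot h p = 0 -> exists z c, h = c *: cross p z.
Proof.
move=> pn hp.
have key k : (k < 3)%N -> ec p k != 0 -> exists z c, h = c *: cross p z.
  move=> hk pk; exists (cross (bv k) h), (- (ec p k)^-1).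
  have dk : dot p (bv k) = ec p k.
    by case: k hk pk => [|[|[|k]]] // _ _; rewrite /dot !ec_bv //=; fring.
  rewrite bac dk (dotC p h) hp scale0r sub0r scalerN scaleNr opprK scalerA mulVf //.
  by rewrite scale1r.
by case: (nz_coord pn) => H; [apply: (key 0%N) | apply: (key 1%N) | apply: (key 2%N)].
Qed.

Lemma param0 : (forall i j, i != j -> det3 (Ap i) (Ap j) (A ord_max) != 0) ->
  exists phi, [/\ Ppol phi, Phom phi, Pvan phi & Psurj phi].
Proof.
move=> H0; exists (fun _ z => z); split.
- by move=> V X Z _ hZ.
- by move=> z; apply: homv_const0.
- by move=> x _ i j z ij /eqP; rewrite (negbTE (H0 i j ij)).
- by move=> x _; exists (x ord_max), 1; rewrite scale1r.
Qed.

Lemma param1 a b : a != b -> det3 (Ap a) (Ap b) (A ord_max) = 0 ->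
  (forall i j, i != j -> det3 (Ap i) (Ap j) (A ord_max) = 0 ->
     det3 (Ap a) (Ap b) (Ap i) = 0 /\ det3 (Ap a) (Ap b) (Ap j) = 0) ->
  exists phi, [/\ Ppol phi, Phom phi, Pvan phi & Psurj phi].
Proof.
move=> ab Eab H1; exists (fun x z => cross (cross (x a) (x b)) z); split.
- move=> V X Z hX hZ; apply: polv_cross => //; exact: polv_cross.
- by move=> z; apply: homv_cross; [apply: homv_cross; apply: homv_var | apply: homv_const0].
- move=> x Rx i j z ij Eij; have [ti tj] := H1 i j ij Eij.
  apply: (copl0 (nzx Rx ab)); rewrite ?dot_self_cross ?dot_cross //.
  + exact: (proj1 (TR _ Rx ab) ti).
  + exact: (proj1 (TR _ Rx ab) tj).
- move=> x Rx; have R'x := realR Rx.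
  have d0 := Edet Rx ab Eab.
  apply: surj1; first exact: nzx R'x ab.
  by rewrite dot_cross.
Qed.

Lemma multpt i j : i != j -> det3 (Ap i) (Ap j) (A ord_max) = 0 ->
  is_mult_point A (cross (Ap i) (Ap j)) /\ on_line (A ord_max) (cross (Ap i) (Ap j)).
Proof.
move=> ij Eij.
have nz : cross (Ap i) (Ap j) != 0.
  by apply: cross_neq0; [apply: hA0 | apply: hAdist; rewrite wd_eq].
split; last by rewrite on_lineE dot_cross Eij.
split => //; exists (wd i), (wd j), ord_max; split; rewrite ?wd_eq ?wd_max //.
by rewrite !on_lineE !dot_cross det3_rep1 det3_rep3 Eij eqxx.
Qed.

Lemma two_pts a b c d i j : a != b -> c != d -> i != j ->
  det3 (Ap a) (Ap b) (A ord_max) = 0 -> det3 (Ap c) (Ap d) (A ord_max) = 0 ->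
  det3 (Ap i) (Ap j) (A ord_max) = 0 ->
  ~ (det3 (Ap a) (Ap b) (Ap c) = 0 /\ det3 (Ap a) (Ap b) (Ap d) = 0) ->
  (det3 (Ap a) (Ap b) (Ap i) = 0 /\ det3 (Ap a) (Ap b) (Ap j) = 0) \/
  (det3 (Ap c) (Ap d) (Ap i) = 0 /\ det3 (Ap c) (Ap d) (Ap j) = 0).
Proof.
move=> ab cd ij Eab Ecd Eij Hn; apply: NNPP => H; apply: hmult.
have ri : dot (Ap i) (cross (Ap i) (Ap j)) = 0 by rewrite dot_cross det3_rep1.
have rj : dot (Ap j) (cross (Ap i) (Ap j)) = 0 by rewrite dot_cross det3_rep3.
have qc : dot (Ap c) (cross (Ap c) (Ap d)) = 0 by rewrite dot_cross det3_rep1.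
have qd : dot (Ap d) (cross (Ap c) (Ap d)) = 0 by rewrite dot_cross det3_rep3.
exists (cross (Ap a) (Ap b)), (cross (Ap c) (Ap d)), (cross (Ap i) (Ap j)); split.
- exact: multpt.
- exact: multpt.
- exact: multpt.
- split.
  + by move=> P; apply: Hn; split; apply: (thru_of P).
  + by move=> P; apply: H; right; split; apply: (thru_of P).
  + by move=> P; apply: H; left; split; apply: (thru_of P).
Qed.

Lemma param2 a b c d : a != b -> c != d -> det3 (Ap a) (Ap b) (A ord_max) = 0 ->
  det3 (Ap c) (Ap d) (A ord_max) = 0 ->
  ~ (det3 (Ap a) (Ap b) (Ap c) = 0 /\ det3 (Ap a) (Ap b) (Ap d) = 0) ->
  exists phi, [/\ Ppol phi, Phom phi, Pvan phi & Psurj phi].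
Proof.
move=> ab cd Eab Ecd Hn.
exists (fun x z => ec z 0%N *: cross (cross (x a) (x b)) (cross (x c) (x d))); split.
- move=> V X Z hX hZ; apply: polv_scale => //.
  by apply: polv_cross; apply: polv_cross.
- move=> z; apply: homv_scale; first exact: hom_const.
  by apply: homv_cross; apply: homv_cross; apply: homv_var.
- move=> x Rx i j z ij Eij.
  case: (two_pts ab cd ij Eab Ecd Eij Hn) => [[ti tj]|[ti tj]].
  + apply: (copl0 (nzx Rx ab)); rewrite ?dotZl ?cross_cross_dotl ?mulr0 ?dot_cross //.
    * exact: (proj1 (TR _ Rx ab) ti).
    * exact: (proj1 (TR _ Rx ab) tj).
  + apply: (copl0 (nzx Rx cd)); rewrite ?dotZl ?cross_cross_dotr ?mulr0 ?dot_cross //.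
    * exact: (proj1 (TR _ Rx cd) ti).
    * exact: (proj1 (TR _ Rx cd) tj).
- move=> x Rx; have R'x := realR Rx.
  set x' := fun i => x (wd i).
  set p := cross (x' a) (x' b); set q := cross (x' c) (x' d).
  have hp : dot (x ord_max) p = 0 by rewrite dot_cross; exact: Edet.
  have hq : dot (x ord_max) q = 0 by rewrite dot_cross; exact: Edet.
  have wn : cross p q != 0.
    apply/negP => /eqP /(PL (nzx R'x cd)) P; apply: Hn.
    have qc : dot (x' c) q = 0 by rewrite dot_cross det3_rep1.
    have qd : dot (x' d) q = 0 by rewrite dot_cross det3_rep3.
    by split; apply/(TR _ R'x ab); apply: (thru_of P).
  have cw : cross (x ord_max) (cross p q) = 0 by rewrite bac hq hp !scale0r subr0.
  have [k Ek] := PL wn cw.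
  exists (bv 0%N), k; rewrite Ek ec_bv //= scale1r.
  by [].
Qed.

Lemma param_exists : exists phi, [/\ Ppol phi, Phom phi, Pvan phi & Psurj phi].
Proof.
case: (classic (exists a b, a != b /\ det3 (Ap a) (Ap b) (A ord_max) = 0)) => [[a [b [ab Eab]]]|H0]; last first.
  apply: param0 => i j ij; apply/eqP => E; apply: H0; by exists i, j.
case: (classic (forall i j, i != j -> det3 (Ap i) (Ap j) (A ord_max) = 0 ->
     det3 (Ap a) (Ap b) (Ap i) = 0 /\ det3 (Ap a) (Ap b) (Ap j) = 0)) => H1.
  exact: (param1 ab Eab H1).
have [c [d [cd [Ecd Hn]]]] : exists c d, c != d /\ det3 (Ap c) (Ap d) (A ord_max) = 0 /\
    ~ (det3 (Ap a) (Ap b) (Ap c) = 0 /\ det3 (Ap a) (Ap b) (Ap d) = 0).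
  apply: NNPP => H; apply: H1 => i j ij Eij; apply: NNPP => Hn; apply: H; by exists i, j.
exact: (param2 ab cd Eab Ecd Hn).
Qed.

Theorem lemma_sec : zariski_irreducible (F:=F) (realization (incidence Ap)) ->
  zariski_irreducible (F:=F) (realization (incidence A)).
Proof.
have [phi [P1 P2 P3 P4]] := param_exists.
exact: (main_sec P1 P2 P3 P4).
Qed.
End Main.

Theorem lemma1 (F : closedFieldType) (charF0 : [pchar F] =i pred0)
  (m : nat) (A : 'I_m.+1 -> 'rV[F]_3)
  (hA0 : forall i, A i != 0)
  (hAdist : forall i j, i != j -> ~ proj_eq (A i) (A j))
  (hmult : at_most_two_mult_on A (A ord_max)) :
  let A' : 'I_m -> 'rV[F]_3 := fun i => A (widen_ord (leqnSn m) i) in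
  zariski_irreducible (F:=F) (realization (F:=F) (incidence A')) ->
  zariski_irreducible (F:=F) (realization (F:=F) (incidence A)).
Proof.
move=> A'; exact: (lemma_sec charF0 hA0 hAdist hmult).
Qed.
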